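(* $\mathrm{non}^{*}_{\omega}(\mathcal{S}pl)=\mathfrak{s}_{\omega}$.
   Context: For an infinite $A\subseteq\omega$, let $S(A)$ be the set of all $\sigma\in2^{<\omega}$ such that $\sigma$ is constant on $A\cap\mathrm{dom}(\sigma)$. The splitting ideal $\mathcal{S}pl$ is the ideal on $2^{<\omega}$ generated by the sets $S(A)$, $A\in[\omega]^{\omega}$. For an ideal $\mathcal{J}$ on a countable set $X$, $\mathrm{non}_{\omega}^*(\mathcal{J})=\min\{|\mathcal{F}|:\mathcal{F}\subseteq[X]^{\omega}$ and for every countable $\bar{A}\subseteq\mathcal{J}$ there is $F\in\mathcal{F}$ such that $A\cap F$ is finite for every $A\in\bar{A}\}$. A family $\mathcal{A}\subseteq[\omega]^{\omega}$ is $\omega$-splitting if for every countable $\{A_{n}:n\in\omega\}\subseteq[\omega]^{\omega}$ there is $A\in\mathcal{A}$ splitting every $A_{n}$ (i.e. $A_n\cap A$ and $A_n\setminus A$ are infinite). $\mathfrak{s}_{\omega}$ is the least size of an $\omega$-splitting family. *)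

(* Defs.v *)
From mathcomp Require Import all_boot.
From mathcomp Require Import boolp classical_sets cardinality.
Set Implicit Arguments. Unset Strict Implicit. Unset Printing Implicit Defensive.
Local Open Scope classical_set_scope.

(* 2^{<omega} is [seq bool]; dom(sigma) = {0, ..., size sigma - 1}. *)
Definition constant_on (A : set nat) (s : seq bool) : Prop :=
  forall i j, A i -> A j -> i < size s -> j < size s -> nth false s i = nth false s j.

Definition S_set (A : set nat) : set (seq bool) := [set s | constant_on A s].

(* The splitting ideal: the ideal on 2^{<omega} generated by the S(A),
   A infinite, i.e. the subsets of finite unions of generators. *)
Definition Spl : set (set (seq bool)) :=
  [set B | exists (n : nat) (Af : nat -> set nat),
      (forall i, i < n -> infinite_set (Af i)) /\
      B `<=` [set s | exists2 i, i < n & S_set (Af i) s]].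

Definition nonstar_omega_family (X : Type) (J : set (set X)) (F : set (set X)) : Prop :=
  (forall G, F G -> infinite_set G) /\
  (forall Abar : set (set X), countable Abar -> Abar `<=` J ->
     exists2 G, F G & forall A, Abar A -> finite_set (A `&` G)).

Definition splits (A B : set nat) : Prop :=
  infinite_set (B `&` A) /\ infinite_set (B `\` A).

Definition omega_splitting (Fa : set (set nat)) : Prop :=
  (forall A, Fa A -> infinite_set A) /\
  (forall An : nat -> set nat, (forall n, infinite_set (An n)) ->
     exists2 A, Fa A & forall n, splits A (An n)).

(* Main.v *)
Require Import Defs.
From mathcomp Require Import all_boot.
From mathcomp Require Import boolp classical_sets cardinality.
Local Open Scope classical_set_scope.
Local Open Scope card_scope.
Set Implicit Arguments. Unset Strict Implicit. Unset Printing Implicit Defensive.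

Lemma fin_bounded (A : set nat) : finite_set A -> exists N, forall x, A x -> x < N.
Proof.
move=> /finite_fsetP[X ->]; exists (\max_(y <- finmap.enum_fset X) y).+1 => x /= Xx.
by rewrite ltnS (leq_bigmax_seq (F := fun y => y) x Xx).
Qed.

Lemma bounded_fin (A : set nat) N : (forall x, A x -> x < N) -> finite_set A.
Proof. by move=> H; apply: (sub_finite_set (B := `I_N)) => //; exact: finite_II. Qed.

Lemma inf_unbounded (A : set nat) : infinite_set A -> forall N, exists x, A x /\ N <= x.
Proof.
move=> iA N; apply: contrapT => H; apply: iA; apply: (@bounded_fin _ N) => x Ax.
rewrite ltnNge; apply/negP => Nx; apply: H; by exists x.
Qed.

Lemma unbounded_inf (A : set nat) : (forall N, exists x, A x /\ N <= x) -> infinite_set A.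
Proof.
move=> H /fin_bounded[N HN]; have [x [Ax Nx]] := H N.
by have := HN _ Ax; rewrite ltnNge Nx.
Qed.

Lemma incr_lt (f : nat -> nat) : (forall t, f t < f t.+1) -> forall t t', t < t' -> f t < f t'.
Proof. by move=> H t t'; apply: (homo_ltn (r := fun a b => a < b)) => // ? ? ?; apply: ltn_trans. Qed.

Lemma incr_inj (f : nat -> nat) : (forall t, f t < f t.+1) -> injective f.
Proof.
move=> H t t' E; case: (ltngtP t t') => // /(incr_lt H); by rewrite E ltnn.
Qed.

Lemma incr_ge (f : nat -> nat) : (forall t, f t < f t.+1) -> forall t, t <= f t.
Proof. by move=> H; elim=> // t IH; apply: leq_ltn_trans IH (H t). Qed.

Lemma enum_inf (B : set nat) : infinite_set B -> exists e : nat -> nat, injective e /\ forall k, B (e k).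
Proof.
move=> iB.
have [g Hg] := choice (fun x => inf_unbounded iB x.+1).
pose e := fix e k := if k is k'.+1 then g (e k') else g 0.
exists e; split; last by case=> [|k]; apply: (Hg _).1.
by apply: incr_inj => t; apply: (Hg _).2.
Qed.

Lemma fin_bseq n : finite_set [set s : seq bool | size s <= n].
Proof.
elim: n => [|n IH].
  apply: (sub_finite_set (B := [set [::]])) => // s /=; by rewrite leqn0 => /nilP ->.
apply: (sub_finite_set (B := [set [::]] `|` (cons true @` [set s : seq bool | size s <= n])
   `|` (cons false @` [set s : seq bool | size s <= n]))).
  case=> [|b s] /=; first by left; left.
  by rewrite ltnS => Hs; case: b; [left; right|right]; exists s.
by rewrite !finite_setU; split; [split => //|]; apply: finite_image.
Qed.

Lemma tail_inf (C : set nat) k : infinite_set C -> infinite_set (C `&` [set i | k <= i]).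
Proof.
move=> iC; apply: unbounded_inf => N; have [x [Cx Hx]] := inf_unbounded iC (N + k).
exists x; split; first split => //=.
all: apply: leq_trans Hx; by rewrite ?leq_addl ?leq_addr.
Qed.

Lemma image_inf (e : nat -> nat) (D : set nat) : injective e -> infinite_set D -> infinite_set (e @` D).
Proof.
move=> ie iD fin; apply: iD; apply: (sub_finite_set (B := e @^-1` (e @` D))).
  by move=> x Dx; exists x.
by apply: finite_preimage => // x y _ _; apply: ie.
Qed.

Lemma transport (e : nat -> nat) (D A : set nat) : splits A (e @` D) -> splits (e @^-1` A) D.
Proof.
case=> H1 H2; split=> fin.
  apply: H1; apply: (sub_finite_set (B := e @` (D `&` e @^-1` A))); last exact: finite_image.
  by move=> _ [[x Dx <-] Ax]; exists x.
apply: H2; apply: (sub_finite_set (B := e @` (D `\` e @^-1` A))); last exact: finite_image.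
by move=> _ [[x Dx <-] Ax]; exists x.
Qed.

Lemma nosplit_const (Y B : set nat) : ~ splits Y B ->
  exists k0 (c : bool), forall i, B i -> k0 <= i -> `[< Y i >] = c.
Proof.
move=> /not_andP[] /contrapT /fin_bounded[N HN].
  exists N, false => i Bi Ni; apply/asboolP => Yi.
  by have := HN i (conj Bi Yi); rewrite ltnNge Ni.
exists N, true => i Bi Ni; apply/asboolP; apply: contrapT => Yi.
by have := HN i (conj Bi Yi); rewrite ltnNge Ni.
Qed.

Lemma countable_enum T (A : set T) : countable A -> A = set0 \/ exists f : nat -> T, A = f @` setT.
Proof. by case/pfcard_geP => [->|/surjfunPex]; [left|right]. Qed.

Lemma pair_surj : exists pr : nat -> nat * nat, forall p, exists k, pr k = p.
Proof.
case: (countable_enum (countableP [set: nat * nat])) => [E|[pr E]].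
  by have : [set: nat * nat] (0, 0) by []; rewrite E.
exists pr => p; have : [set: nat * nat] p by [].
by rewrite E => -[k _ <-]; exists k.
Qed.

Definition chain (A : set nat) n : seq bool := mkseq (fun i => `[< A i >]) n.
Definition chainset (A : set nat) : set (seq bool) := range (chain A).

Lemma chainset_inf A : infinite_set (chainset A).
Proof.
move=> fin; apply: infinite_nat.
have -> : [set: nat] = chain A @^-1` chainset A by apply/seteqP; split => // n _; exists n.
apply: finite_preimage => // m n _ _ E.
by have := congr1 size E; rewrite /chain !size_mkseq.
Qed.

Lemma chain_S_fin A B b1 b2 : B b1 -> A b1 -> B b2 -> ~ A b2 ->
  finite_set (S_set B `&` chainset A).
Proof.
move=> B1 A1 B2 A2.
apply: (sub_finite_set (B := chain A @` `I_(maxn b1 b2).+1)); last first.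
  by apply: finite_image; exact: finite_II.
move=> s [Hc [n _ En]]; rewrite -En in Hc *; exists n => //=; rewrite ltnS leqNgt; apply/negP => Hn.
have h1 : b1 < size (chain A n) by rewrite size_mkseq; apply: leq_ltn_trans Hn; exact: leq_maxl.
have h2 : b2 < size (chain A n) by rewrite size_mkseq; apply: leq_ltn_trans Hn; exact: leq_maxr.
have := Hc _ _ B1 B2 h1 h2; rewrite /chain size_mkseq in h1 h2.
rewrite !nth_mkseq // => /esym E.
by apply: A2; apply/asboolP; rewrite E; apply/asboolP.
Qed.

Lemma finU n (P : nat -> set (seq bool)) : (forall i, i < n -> finite_set (P i)) ->
  finite_set [set s | exists2 i, i < n & P i s].
Proof.
elim: n => [|n IH] H.
  by apply: (sub_finite_set (B := set0)); [move=> s [] | exact: finite_set0].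
apply: (sub_finite_set (B := [set s | exists2 i, i < n & P i s] `|` P n)).
  move=> s [i]; rewrite ltnS leq_eqVlt => /orP[/eqP -> |]; first by right.
  by move=> hi Pi; left; exists i.
rewrite finite_setU; split; first by apply: IH => i hi; apply: H; apply: ltnW.
exact: H.
Qed.

Lemma dir2 (G0 : set (set nat)) : omega_splitting G0 ->
  exists2 F : set (set (seq bool)), nonstar_omega_family Spl F & F #<= G0.
Proof.
case=> G0inf G0split; exists (chainset @` G0); last exact: card_image_le.
split; first by move=> _ [A _ <-]; exact: chainset_inf.
move=> Abar cAbar AbarS.
case: (countable_enum cAbar) => [E|[fn E]].
  have [A GA _] := G0split (fun _ => setT) (fun _ => infinite_nat).
  by exists (chainset A); [exists A | move=> X; rewrite E].
have Hd : forall j, exists d : nat * (nat -> set nat),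
    (forall i, i < d.1 -> infinite_set (d.2 i)) /\
    fn j `<=` [set s | exists2 i, i < d.1 & S_set (d.2 i) s].
  move=> j; have : Abar (fn j) by rewrite E; exists j.
  by move=> /AbarS[n [Af [H1 H2]]]; exists (n, Af).
have [d Hdd] := choice Hd.
have [pr Hpr] := pair_surj.
pose An k := if (pr k).2 < (d (pr k).1).1 then (d (pr k).1).2 (pr k).2 else setT.
have Ainf : forall k, infinite_set (An k).
  move=> k; rewrite /An; case: ifP => h; first exact: (Hdd _).1.
  exact: infinite_nat.
have [A GA HA] := G0split An Ainf.
exists (chainset A); first by exists A.
move=> X; rewrite E => -[j _ <-].
apply: (sub_finite_set (B := [set s | exists2 i, i < (d j).1 &
            (S_set ((d j).2 i) `&` chainset A) s])).
  move=> s [/(Hdd j).2 [i hi Si] Cs]; exists i => //.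
apply: finU => i hi.
have [k Hk] := Hpr (j, i).
have := HA k; rewrite /An Hk /= hi => -[/infinite_setN0[b1 [B1 A1]] /infinite_setN0[b2 [B2 A2]]].
exact: (chain_S_fin B1 A1 B2 A2).
Qed.

Definition compat (u s : seq bool) :=
  forall i, i < size u -> i < size s -> nth false s i = nth false u i.

Fixpoint pref (P : seq bool -> Prop) n : seq bool :=
  if n is n'.+1 then rcons (pref P n') `[< P (rcons (pref P n') true) >] else [::].

Lemma konig (G : set (seq bool)) : infinite_set G ->
  exists y : nat -> bool, forall n, infinite_set
    [set s | G s /\ forall i, i < n -> i < size s -> nth false s i = y i].
Proof.
move=> iG.
pose P u := infinite_set [set s | G s /\ compat u s].
pose p := pref P.
have size_p : forall n, size (p n) = n by elim=> //= n IH; rewrite size_rcons IH.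
have step : forall u, P u -> P (rcons u `[< P (rcons u true) >]).
  move=> u Pu; case: (pselect (P (rcons u true))) => h.
    by rewrite asboolT.
  rewrite asboolF // => fin; apply: Pu.
  apply: (sub_finite_set (B := [set s | size s <= size u] `|`
      [set s | G s /\ compat (rcons u true) s] `|` [set s | G s /\ compat (rcons u false) s])).
    move=> s [Gs cs]; case: (leqP (size s) (size u)) => hs; first by left; left.
    have cb : compat (rcons u (nth false s (size u))) s.
      move=> i; rewrite size_rcons ltnS leq_eqVlt => /orP[/eqP -> _|hi hs'].
        by rewrite nth_rcons ltnn eqxx.
      by rewrite nth_rcons hi; apply: cs.
    by case: (nth false s (size u)) cb => cb; [left; right|right].
  rewrite !finite_setU; split; [split|] => //; first exact: fin_bseq.
  exact: contrapT.
have P_p : forall n, P (p n).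
  elim=> [|n IH] /=.
    apply: (sub_infinite_set (A := G)) => // s Gs; split => // i; by rewrite ltn0.
  exact: step.
pose y i := nth false (p i.+1) i.
have nth_p : forall n i, i < n -> nth false (p n) i = y i.
  elim=> // n IH i; rewrite ltnS leq_eqVlt => /orP[/eqP -> //|hi].
  by rewrite /= nth_rcons size_p hi IH.
exists y => n; apply: (sub_infinite_set _ (P_p n)) => s [Gs cs]; split => // i hi hs.
by rewrite cs ?size_p // nth_p.
Qed.

Lemma comb (G : set (seq bool)) : infinite_set G ->
  exists (y : nat -> bool) (s : nat -> nat) (tau : nat -> seq bool),
  [/\ forall t, G (tau t),
      forall t i, i < s t -> i < size (tau t) -> nth false (tau t) i = y i,
      forall t, s t <= size (tau t) &
      forall t, size (tau t) < s t.+1].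
Proof.
move=> /konig[y Hy].
have Hp : forall n, exists sg, [/\ G sg, forall i, i < n -> i < size sg -> nth false sg i = y i
   & n <= size sg].
  move=> n; have /infinite_setN0[sg [[Gs cs] hs]] := infinite_setD (Hy n) (fin_bseq n).
  by exists sg; split => //; apply: ltnW; rewrite ltnNge; apply/negP.
have [pick Hpick] := choice Hp.
pose s := fix f t := if t is t'.+1 then (size (pick (f t'))).+1 else 0.
exists y, s, (fun t => pick (s t)); split.
- by move=> t; case: (Hpick (s t)).
- by move=> t; case: (Hpick (s t)).
- by move=> t; case: (Hpick (s t)).
- by [].
Qed.

Lemma key (G : set (seq bool)) (y : nat -> bool) (s : nat -> nat) (tau : nat -> seq bool)
  (C : set nat) k0 (c : bool) :
  (forall t, G (tau t)) ->
  (forall t i, i < s t -> i < size (tau t) -> nth false (tau t) i = y i) ->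
  (forall t, s t <= size (tau t)) ->
  (forall t, size (tau t) < s t.+1) ->
  (forall i, C i -> k0 <= i -> y i = c) ->
  finite_set (S_set (C `&` [set i | k0 <= i]) `&` G) ->
  splits [set i | exists t, ~~ odd t /\ s t <= i < size (tau t)] C.
Proof.
move=> HG Hc Hs HL Hy fin.
have sincr : forall t, s t < s t.+1 by move=> t; apply: leq_ltn_trans (Hs t) (HL t).
have Lincr : forall t, size (tau t) < size (tau t.+1).
  by move=> t; apply: leq_trans (HL t) (Hs t.+1).
have tinj : injective tau.
  by move=> t t' E; apply: (incr_inj Lincr); rewrite /= E.
have /fin_bounded[T1 HT1] : finite_set (tau @^-1` (S_set (C `&` [set i | k0 <= i]) `&` G)).
  by apply: finite_preimage => // a b _ _; apply: tinj.
have claim : forall t, T1 <= t -> exists p, C p /\ s t <= p < size (tau t).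
  move=> t ht; apply: contrapT => Hno.
  have : t < T1.
    apply: HT1; split => //= i j [Ci ki] [Cj kj] hi hj.
    have lt_i : i < s t.
      rewrite ltnNge; apply/negP => h; apply: Hno; exists i; by rewrite h hi.
    have lt_j : j < s t.
      rewrite ltnNge; apply/negP => h; apply: Hno; exists j; by rewrite h hj.
    by rewrite !Hc // !Hy.
  by rewrite ltnNge ht.
have disj : forall t t' p, s t <= p < size (tau t) -> s t' <= p < size (tau t') -> t = t'.
  have H : forall t t' p, t < t' -> s t <= p < size (tau t) -> s t' <= p -> False.
    move=> t t' p htt /andP[_ h1] h2.
    have : s t.+1 <= s t'.
      move: htt; rewrite leq_eqVlt => /orP[/eqP -> //|h]; apply: ltnW; exact: incr_lt.
    move=> h3; have := leq_trans (leq_trans (HL t) h3) h2.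
    by rewrite ltnNge ltnW.
  move=> t t' p h h'; case: (ltngtP t t') => // htt.
    by case: (H _ _ _ htt h); case/andP: h'.
  by case: (H _ _ _ htt h'); case/andP: h.
have hd : forall a, a <= a.*2 by move=> a; rewrite -addnn leq_addr.
split; apply: unbounded_inf => N.
  have [p [Cp hp]] := claim (T1 + N).*2 (leq_trans (leq_addr _ _) (hd _)).
  exists p; split; first by split => //; exists (T1 + N).*2; rewrite odd_double.
  case/andP: hp => hp _; apply: leq_trans hp; apply: leq_trans (incr_ge sincr _).
  by apply: leq_trans (leq_addl T1 N) _; rewrite -addnn leq_addr.
have hT : T1 <= (T1 + N).*2.+1.
  apply: leq_trans (leq_addr N _) _; apply: leq_trans (hd _) _; exact: leqnSn.
have [p [Cp hp]] := claim _ hT.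
exists p; split.
  split => // -[t [ht hp']]; have E := disj _ _ _ hp hp'.
  by move: ht; rewrite -E /= odd_double.
case/andP: hp => hp _; apply: leq_trans hp; apply: leq_trans (incr_ge sincr _).
apply: leq_trans (leq_addl T1 N) _; rewrite -addnn; apply: leq_trans (leqnSn _); exact: leq_addr.
Qed.

Lemma dir1 (F : set (set (seq bool))) : nonstar_omega_family Spl F ->
  exists2 G0 : set (set nat), omega_splitting G0 & G0 #<= F.
Proof.
case=> Finf Fprop.
have Hc : forall G : set (seq bool), exists cb : (nat -> bool) * (nat -> nat) * (nat -> seq bool),
   infinite_set G ->
   [/\ forall t, G (cb.2 t),
      forall t i, i < cb.1.2 t -> i < size (cb.2 t) -> nth false (cb.2 t) i = cb.1.1 i,
      forall t, cb.1.2 t <= size (cb.2 t) &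
      forall t, size (cb.2 t) < cb.1.2 t.+1].
  move=> G; case: (pselect (infinite_set G)) => iG.
    by have [y [s [tau H]]] := comb iG; exists (y, s, tau).
  by exists (fun _ => false, fun _ => 0, fun _ => [::]).
have [cb Hcb] := choice Hc.
pose Y G := [set i | (cb G).1.1 i].
pose AJ G := [set i | exists t, ~~ odd t /\ (cb G).1.2 t <= i < size ((cb G).2 t)].
pose Ys := (Y @` F) `&` [set A | infinite_set A].
case: (pselect (forall An : nat -> set nat, (forall n, infinite_set (An n)) ->
   exists2 A, Ys A & forall n, splits A (An n))) => [HY|HY].
  exists Ys; first by split => // A [].
  by apply: card_le_trans (subset_card_le (@subIsetl _ _ _)) (card_image_le Y F).
move/existsNP: HY => [Bs /not_implyP[Bsinf HY2]].
have HB : forall A, Ys A -> exists n, ~ splits A (Bs n).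
  move=> A YA; apply: contrapT => H; apply: HY2; exists A => // n.
  by apply: contrapT => Hn; apply: H; exists n.
have [e He] := choice (fun n => enum_inf (Bsinf n)).
pose As n := ((fun G => e n @^-1` AJ G) @` F) `&` [set A | infinite_set A].
case: (pselect (exists n, forall Dn : nat -> set nat, (forall m, infinite_set (Dn m)) ->
   exists2 A, As n A & forall m, splits A (Dn m))) => [[n Hn]|HA].
  exists (As n); first by split => // A [].
  by apply: card_le_trans (subset_card_le (@subIsetl _ _ _)) (card_image_le _ F).
have HD : forall n, exists Ds : nat -> set nat, (forall m, infinite_set (Ds m)) /\
    forall A, As n A -> exists m, ~ splits A (Ds m).
  move=> n; move/forallNP: HA => /(_ n) /existsNP[Ds /not_implyP[Dinf Hn]].
  exists Ds; split => // A AsA; apply: contrapT => H; apply: Hn; exists A => // m.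
  by apply: contrapT => Hm; apply: H; exists m.
have [D HDD] := choice HD.
pose C n m := e n @` D n m.
have Cinf : forall n m, infinite_set (C n m).
  by move=> n m; apply: image_inf; [exact: (He n).1 | exact: (HDD n).1].
pose Abar := (fun p : nat * nat * nat => S_set (C p.1.1 p.1.2 `&` [set i | p.2 <= i])) @` setT.
have cAbar : countable Abar.
  by apply: card_le_trans (card_image_le _ _) _; exact: countableP.
have AbarS : Abar `<=` Spl.
  move=> _ [p _ <-]; exists 1, (fun _ => C p.1.1 p.1.2 `&` [set i | p.2 <= i]); split.
    by move=> i _; apply: tail_inf.
  by move=> s Ss; exists 0.
have [G FG HG] := Fprop Abar cAbar AbarS.
have [HG1 HG2 HG3 HG4] := Hcb G (Finf G FG).
have [n Hn] : exists n, ~ splits (Y G) (Bs n).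
  case: (pselect (infinite_set (Y G))) => iY.
    by apply: HB; split => //; exists G.
  exists 0 => -[H _]; apply: H; apply: (sub_finite_set (B := Y G)); first exact: subIsetr.
  exact: contrapT.
have [k0 [c Hk]] := nosplit_const Hn.
have [m Hm] : exists m, ~ splits (e n @^-1` AJ G) (D n m).
  case: (pselect (infinite_set (e n @^-1` AJ G))) => iA.
    by apply: (HDD n).2; split => //; exists G.
  exists 0 => -[H _]; apply: H; apply: (sub_finite_set (B := e n @^-1` AJ G)); first exact: subIsetr.
  exact: contrapT.
exfalso; apply: Hm; apply: transport.
apply: (key (k0 := k0) (c := c) HG1 HG2 HG3 HG4).
  move=> i [x Dx <-] hk; rewrite -(Hk _ _ hk) ?asboolb //; exact: (He n).2.
by apply: HG; exists (n, m, k0).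
Qed.

Theorem mainTheorem15 :
  (forall F : set (set (seq bool)), nonstar_omega_family Spl F ->
     exists2 G : set (set nat), omega_splitting G & G #<= F) /\
  (forall G : set (set nat), omega_splitting G ->
     exists2 F : set (set (seq bool)), nonstar_omega_family Spl F & F #<= G).
Proof. split; [exact: dir1 | exact: dir2]. Qed.
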